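(* Let $n\ge3$, $\boldsymbol\ell$ positive lengths, $\mu,\tau^*\in\mathbb{R}$, and $\xi$, $N>0$ smooth functions on $T^n$ depending only on $s^1$, with $\int_{T^n}\xi N\,dV_{\boldsymbol\ell}=0$. Consider the CTS-H$^*$ conformal data set $(g_{\boldsymbol\ell},\mu\sigma^\flat_{\boldsymbol\ell},\tau^*,\xi,N)$. (1) If $\mu$ and $\tau^*$ are nonzero and have the same sign, there is a solution $(\phi,W)$ of the CTS-H$^*$ equations with $\phi\equiv c=(\mu/\tau^* )^{1/q}$, where $W$ is parallel to $\partial_{s^1}$ and $\frac1{2N}\mathcal{L}_{g_{\boldsymbol\ell}}W=c^{-q}\xi\,\sigma^\flat_{\boldsymbol\ell}$. The generated solution of the constraint equations is $$\bar g=g_{r\boldsymbol\ell},\qquad \bar K=\bar\tau\,(r\ell_1)^2(ds^1)^2,\qquad \bar\tau=\tau^*+c^{-2q}\xi,\qquad r=c^{(q-2)/2}=(\mu/\tau^* )^{1/n}.$$ (2) If $\mu=\tau^*=0$, then for every $c>0$ there is a solution $(\phi,W)$ of the CTS-H$^*$ equations with $\phi\equiv c$ and $\frac1{2N}\mathcal{L}_{g_{\boldsymbol\ell}}W=c^{-q}\xi\,\sigma^\flat_{\boldsymbol\ell}$, and the associated solution of the constraint equations is $\bar g=g_{r\boldsymbol\ell}$, $\bar K=\bar\tau\,(r\ell_1)^2(ds^1)^2$ with $\bar\tau=c^{-2q}\xi$ and $r=c^{(q-2)/2}$.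
   Context: $q=\frac{2n}{n-2}$, $\kappa=\frac{n-1}{n}$. $T^n=(\mathbb{R}/\mathbb{Z})^n$ with unit coordinates $(s^1,\ldots,s^n)$; $g_{\boldsymbol\ell}=\sum_k\ell_k^2(ds^k)^2$ with volume form $dV_{\boldsymbol\ell}$; $r\boldsymbol\ell=(r\ell_1,\ldots,r\ell_n)$; $\sigma^\flat_{\boldsymbol\ell}=\kappa\ell_1^2(ds^1)^2-\frac1n\sum_{k\ge2}\ell_k^2(ds^k)^2$ (transverse-traceless for $g_{\boldsymbol\ell}$). $\mathcal{L}_gW=L_Wg-\frac2n(\mathrm{div}_gW)g$. CTS-H$^*$ (lapse-scaled mean curvature) method: data $(g,\sigma,\tau^*,\xi,N)$ with $\sigma$ transverse-traceless, $\tau^*$ constant, $N>0$, $\int\xi N\,dV_g=0$. A solution of the CTS-H$^*$ equations is a pair $(\phi,W)$, $\phi>0$ a function and $W$ a vector field, such that $$\bar g=\phi^{q-2}g,\qquad \bar K=\phi^{-2}\Big(\sigma+\tfrac1{2N}\mathcal{L}_gW\Big)+\frac{\tau^*+\phi^{-2q}\xi}{n}\bar g$$ solves the Einstein constraint equations $R_{\bar g}-|\bar K|^2_{\bar g}+(\mathrm{tr}_{\bar g}\bar K)^2=0$, $\mathrm{div}_{\bar g}\bar K=d(\mathrm{tr}_{\bar g}\bar K)$; this $(\bar g,\bar K)$ is the generated solution. *)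

(* Defs.v *)
(* Tensor fields on T^n = R^n/Z^n are represented by
   their components in the unit coordinates (s^1,...,s^n) as Z^n-periodic
   functions on R^n = 'rV[R]_n. Coordinate s^1 is the index with value 0. *)
From HB Require Import structures.
From mathcomp Require Import all_boot all_order all_algebra.
From mathcomp Require Import all_classical all_reals all_analysis.
Set Implicit Arguments. Unset Strict Implicit. Unset Printing Implicit Defensive.
Import Order.TTheory GRing.Theory Num.Theory.
Import numFieldNormedType.Exports.
Local Open Scope classical_set_scope.
Local Open Scope ring_scope.

Section TorusGeometry.
Variable R : realType.
Variable n : nat.

Notation pt := 'rV[R]_n.
Definition sfield := pt -> R.
Definition vfield := 'I_n -> pt -> R.
Definition tfield := 'I_n -> 'I_n -> pt -> R.

Definition ebas (i : 'I_n) : pt := delta_mx 0 i.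

Definition pd (i : 'I_n) (f : sfield) : sfield := fun x => 'D_(ebas i) f x.

Definition iter_pd (s : seq 'I_n) (f : sfield) : sfield := foldr pd f s.

Definition smooth (f : sfield) : Prop :=
  forall (s : seq 'I_n) (x : pt), differentiable (iter_pd s f) x.

Definition periodic (f : sfield) : Prop :=
  forall (x : pt) (i : 'I_n), f (x + ebas i) = f x.

Definition torus_fun (f : sfield) : Prop := smooth f /\ periodic f.

Definition dep_s1 (f : sfield) : Prop :=
  forall x y : pt, (forall i : 'I_n, val i = 0%N -> x 0 i = y 0 i) -> f x = f y.

Definition gmat (g : tfield) (x : pt) : 'M[R]_n := \matrix_(i, j) g i j x.
Definition ginv (g : tfield) (i j : 'I_n) (x : pt) : R := invmx (gmat g x) i j.

Definition Gamma (g : tfield) (k i j : 'I_n) : sfield := fun x =>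
  2^-1 * \sum_(l < n) ginv g k l x *
     (pd i (g j l) x + pd j (g i l) x - pd l (g i j) x).

Definition ricci (g : tfield) (i j : 'I_n) : sfield := fun x =>
  \sum_(k < n) (pd k (Gamma g k i j) x - pd j (Gamma g k i k) x
     + \sum_(l < n) (Gamma g k k l x * Gamma g l i j x
                     - Gamma g k j l x * Gamma g l i k x)).

Definition scal (g : tfield) : sfield := fun x =>
  \sum_(i < n) \sum_(j < n) ginv g i j x * ricci g i j x.

Definition trK (g K : tfield) : sfield := fun x =>
  \sum_(i < n) \sum_(j < n) ginv g i j x * K i j x.

Definition normK (g K : tfield) : sfield := fun x =>
  \sum_(i < n) \sum_(j < n) \sum_(a < n) \sum_(b < n)
     ginv g i a x * ginv g j b x * K i j x * K a b x.

Definition covD (g K : tfield) (k i j : 'I_n) : sfield := fun x =>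
  pd k (K i j) x - \sum_(l < n) (Gamma g l k i x * K l j x + Gamma g l k j x * K i l x).

Definition divK (g K : tfield) (j : 'I_n) : sfield := fun x =>
  \sum_(i < n) \sum_(k < n) ginv g i k x * covD g K k i j x.

Definition constraints (g K : tfield) : Prop :=
  forall x : pt,
    scal g x - normK g K x + (trK g K x) ^+ 2 = 0 /\
    forall j : 'I_n, divK g K j x = pd j (trK g K) x.

Definition lieg (W : vfield) (g : tfield) (i j : 'I_n) : sfield := fun x =>
  \sum_(k < n) (W k x * pd k (g i j) x + g k j x * pd i (W k) x
                + g i k x * pd j (W k) x).

Definition divW (g : tfield) (W : vfield) : sfield := fun x =>
  \sum_(k < n) (pd k (W k) x + \sum_(l < n) Gamma g k k l x * W l x).

Definition confKill (g : tfield) (W : vfield) (i j : 'I_n) : sfield := fun x =>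
  lieg W g i j x - 2 / n%:R * divW g W x * g i j x.

Definition qexp : R := 2 * n%:R / (n%:R - 2).
Definition kappa : R := (n%:R - 1) / n%:R.

Definition gen_metric (g : tfield) (phi : sfield) : tfield := fun i j x =>
  (phi x) `^ (qexp - 2) * g i j x.

Definition gen_K (g sigma : tfield) (taus : R) (xi N phi : sfield) (W : vfield)
  : tfield := fun i j x =>
  (phi x) `^ (-2) * (sigma i j x + (2 * N x)^-1 * confKill g W i j x)
  + (taus + (phi x) `^ (- (2 * qexp)) * xi x) / n%:R * gen_metric g phi i j x.

Definition CTS_solution (g sigma : tfield) (taus : R) (xi N : sfield)
  (phi : sfield) (W : vfield) : Prop :=
  torus_fun phi /\ (forall x, 0 < phi x) /\ (forall k, torus_fun (W k)) /\
  constraints (gen_metric g phi) (gen_K g sigma taus xi N phi W).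

Definition gflat (l : 'I_n -> R) : tfield := fun i j _ =>
  if i == j then l i ^+ 2 else 0.

Definition sigma_flat (l : 'I_n -> R) : tfield := fun i j _ =>
  if i == j then (if val i == 0%N then kappa * l i ^+ 2 else - (n%:R^-1) * l i ^+ 2)
  else 0.

(* integral over T^n w.r.t. dV_g = sqrt(det g) ds^1...ds^n, as an iterated
   integral over the unit cube [0,1]^n *)
Definition set_coord (x : pt) (k : 'I_n) (t : R) : pt := x + (t - x 0 k) *: ebas k.

Definition iter_int (s : seq 'I_n) (f : sfield) : sfield :=
  foldr (fun k F => fun x =>
           Rintegral (@lebesgue_measure R) `[0%R, 1%R] (fun t => F (set_coord x k t)))
        f s.

Definition torus_int (g : tfield) (f : sfield) : R :=
  iter_int (enum 'I_n) (fun x => f x * Num.sqrt (\det (gmat g x))) 0.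

End TorusGeometry.

(* Main.v *)
Require Import Defs.
From HB Require Import structures.
From mathcomp Require Import all_boot all_order all_algebra.
From mathcomp Require Import all_classical all_reals all_analysis.
From mathcomp Require Import ring lra.
Set Implicit Arguments. Unset Strict Implicit. Unset Printing Implicit Defensive.
Import Order.TTheory GRing.Theory Num.Theory.
Import numFieldNormedType.Exports.
Local Open Scope classical_set_scope.
Local Open Scope ring_scope.

Section Smooth.
Variable R : realType.
Variable n : nat.
Notation pt := 'rV[R]_n.

Lemma pd_inv (i : 'I_n) (f : pt -> R) x :
  (forall t : R, f (x + t *: ebas R i) = f x) -> pd i f x = 0.
Proof.
move=> H; rewrite /pd -(derive_cst (f x) x (ebas R i)) /derive.
suff -> : (fun h : R => h^-1 *: ((f \o shift x) (h *: ebas R i) - f x)) =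
  (fun h => h^-1 *: ((cst (f x) \o shift x) (h *: ebas R i) - cst (f x) x)) by [].
by apply/funext => h /=; rewrite (addrC _ x) H.
Qed.

Lemma iter_pd_rcons s i (f : pt -> R) : iter_pd (rcons s i) f = iter_pd s (pd i f).
Proof. by rewrite /iter_pd foldr_rcons. Qed.

Lemma smooth_pd i (f : pt -> R) : smooth f -> smooth (pd i f).
Proof. by move=> H s x; rewrite -iter_pd_rcons; apply: H. Qed.

Lemma smooth_diff (f : pt -> R) x : smooth f -> differentiable f x.
Proof. by move=> H; apply: (H [::]). Qed.

Lemma pd_add i (f g : pt -> R) : (forall x, differentiable f x) -> (forall x, differentiable g x) ->
  pd i (f \+ g) = pd i f \+ pd i g.
Proof.
move=> df dg; apply/funext => x; rewrite /pd.
by rewrite (@deriveD _ _ _ f g) //; apply: diff_derivable.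
Qed.

Lemma pd_mul i (f g : pt -> R) : (forall x, differentiable f x) -> (forall x, differentiable g x) ->
  pd i (f \* g) = (pd i f \* g) \+ (f \* pd i g).
Proof.
move=> df dg; apply/funext => x; rewrite /pd.
rewrite (@deriveM _ _ f g) //; try apply: diff_derivable => //.
by rewrite /= /GRing.scale /= addrC mulrC.
Qed.

Lemma iter_pd_add s (f g : pt -> R) :
  (forall t x, (size t < size s)%N -> differentiable (iter_pd t f) x) ->
  (forall t x, (size t < size s)%N -> differentiable (iter_pd t g) x) ->
  iter_pd s (f \+ g) = iter_pd s f \+ iter_pd s g.
Proof.
elim: s => [//|i s IH] Hf Hg /=.
rewrite IH; last first.
- by move=> t x st; apply: Hg; rewrite /= ltnS ltnW.
- by move=> t x st; apply: Hf; rewrite /= ltnS ltnW.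
by apply: pd_add => x; [apply: (Hf s) | apply: (Hg s)].
Qed.

Lemma smooth_add (f g : pt -> R) : smooth f -> smooth g -> smooth (f \+ g).
Proof.
move=> Hf Hg s x; rewrite iter_pd_add; first exact: differentiableD.
- by move=> t y _; apply: Hf.
- by move=> t y _; apply: Hg.
Qed.

Lemma smooth_mul (f g : pt -> R) : smooth f -> smooth g -> smooth (f \* g).
Proof.
move=> Hf Hg s x.
suff: forall k (f g : pt -> R), smooth f -> smooth g -> forall s, (size s <= k)%N ->
  forall x, differentiable (iter_pd s (f \* g)) x by move=> /(_ (size s)); apply.
elim=> [|k IH] {}f {}g {}Hf {}Hg {}s.
  rewrite leqn0 size_eq0 => /eqP -> {}x /=; exact: differentiableM (smooth_diff _ Hf) (smooth_diff _ Hg).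
case/lastP: s => [|s i] Hs {}x.
  exact: differentiableM (smooth_diff _ Hf) (smooth_diff _ Hg).
move: Hs; rewrite size_rcons ltnS => Hs.
rewrite iter_pd_rcons pd_mul; try by move=> y; apply: smooth_diff.
rewrite iter_pd_add.
- apply: differentiableD; apply: IH => //; exact: smooth_pd.
- by move=> t y st; apply: IH => //; [exact: smooth_pd | apply: leq_trans Hs; apply: ltnW].
- by move=> t y st; apply: IH => //; [exact: smooth_pd | apply: leq_trans Hs; apply: ltnW].
Qed.

Lemma pd_cst i (a : R) : pd i (fun _ : pt => a) = fun _ => 0.
Proof. by apply/funext => y; apply: pd_inv. Qed.

Lemma iter_pd_cst s (a : R) :
  iter_pd s (fun _ : pt => a) = fun _ => if s is [::] then a else 0.
Proof. by elim: s => [//|i s IH] /=; rewrite IH pd_cst. Qed.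

Lemma smooth_cst (a : R) : smooth (fun _ : pt => a).
Proof. by move=> s x; rewrite iter_pd_cst; exact: differentiable_cst. Qed.

End Smooth.

Section Antider.
Variable R : realType.
Variable h : R -> R.
Hypothesis hc : continuous h.
Hypothesis hp : forall t, h (t + 1) = h t.
Hypothesis h0 : (\int[@lebesgue_measure R]_(t in `[0, 1]) h t)%R = 0.
Notation mu := (@lebesgue_measure R).

Let G a b := (\int[mu]_(t in `[a, b]) h t)%R.

Let intab a b : mu.-integrable `[a, b] (EFin \o h).
Proof.
apply: continuous_compact_integrable; first exact: segment_compact.
by apply: continuous_subspaceT => x; apply: hc.
Qed.

Let Gadd a x b : a <= x -> x <= b -> G a b = G a x + G x b.
Proof.
move=> ax xb; rewrite /G.
have := @Rintegral_itvB R h (BLeft a) (BRight b) x (intab a b).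
rewrite !bnd_simp => /(_ ax xb) => E.
rewrite -[X in _ = _ + X]Rintegral_itv_obnd_cbnd; last first.
  apply: integrableS (intab x b) => //; apply: subset_itvr; by rewrite bnd_simp.
by rewrite -E addrC subrK.
Qed.

Let FTCa (a t : R) : a < t -> is_derive t 1 (fun y => G a y) (h t).
Proof.
move=> at_.
have [d1 d2] := @continuous_FTC1_closed R h a t (t + 1) (ltr_pwDr ltr01 (lexx t)) (intab a (t+1)) at_ (@hc t).
by apply: DeriveDef; [exact: d1 | rewrite -derive1E; exact: d2].
Qed.

Let shift_derive (g : R -> R) (x c d : R) : is_derive (x + c) 1 g d ->
  is_derive x 1 (fun y => g (y + c)) d.
Proof.
move=> [dg <-].
have E : (fun k : R => k^-1 *: (((fun y => g (y + c)) \o shift x) (k *: 1) - g (x + c)))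
  = (fun k : R => k^-1 *: ((g \o shift (x + c)) (k *: 1) - g (x + c))).
  by apply/funext => k /=; rewrite addrA.
apply: DeriveDef; first by rewrite /derivable E.
by rewrite /derive E.
Qed.

Let near_gt (a y : R) : a < y -> \forall z \near y, a < z.
Proof.
move=> ay; have := @Nlt_nbhsl R y (- a); rewrite ltrN2 => /(_ ay).
by apply: filterS => z; rewrite ltrN2.
Qed.

Let Dcst x : G x (x + 1) = 0.
Proof.
transitivity (G 0 (0 + 1)); last by rewrite add0r.
apply: (@is_derive_0_is_cst R (fun x => G x (x + 1))) => y.
have E : \forall z \near y, (fun z => G (y - 1) (z + 1) - G (y - 1) z) z =
                 (fun z => G z (z + 1)) z.
  have := near_gt (_ : y - 1 < y); rewrite ltrBlDr ltrDl ltr01 => /(_ isT).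
  apply: filterS => z /ltW yz /=.
  rewrite (@Gadd (y - 1) z (z + 1)) //; first by rewrite addrC addKr.
  by rewrite lerDl ler01.
apply: (near_eq_is_derive E).
rewrite -(subrr (h y)) -{1}hp.
apply: is_deriveB; last by apply: FTCa; rewrite ltrBlDr ltrDl ltr01.
apply: shift_derive; apply: FTCa.
by rewrite ltrBlDr -addrA ltrDl addr_gt0 // ltr01.
Qed.

Let F (t : R) : R := if 0 <= t then G 0 t else - G t 0.

Let Fa a t : a <= t -> a <= 0 -> F t = G a t - G a 0.
Proof.
move=> at_ a0; rewrite /F; case: ifP => t0.
  by rewrite (@Gadd a 0 t) // addrC addKr.
rewrite (@Gadd a t 0) //; last by rewrite leNgt; apply/negP => /ltW; rewrite t0.
by rewrite opprD addNKr.
Qed.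

Lemma antider_ex : exists F : R -> R,
  (forall t : R, is_derive t (1 : R) F (h t)) /\ (forall t, F (t + 1) = F t).
Proof.
exists F; split.
- move=> t; set a := Num.min t 0 - 1.
  have mt : Num.min t 0 <= t by rewrite ge_min lexx.
  have m0 : Num.min t 0 <= 0 by rewrite ge_min lexx orbT.
  have at_ : a < t by rewrite /a; lra.
  have a0 : a <= 0 by rewrite /a; lra.
  have E : \forall z \near t, (fun z => G a z - G a 0) z = F z.
    by apply: filterS (near_gt at_) => z /ltW az; rewrite (Fa az a0).
  apply: (near_eq_is_derive E).
  rewrite -(subr0 (h t)).
  apply: is_deriveB; first exact: FTCa.
- move=> t; set a := Num.min t 0 - 1.
  have mt : Num.min t 0 <= t by rewrite ge_min lexx.
  have m0 : Num.min t 0 <= 0 by rewrite ge_min lexx orbT.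
  have at_ : a <= t by rewrite /a; lra.
  have a0 : a <= 0 by rewrite /a; lra.
  rewrite (Fa at_ a0) (@Fa a (t + 1)) //; last by rewrite (le_trans at_) // lerDl ler01.
  rewrite (@Gadd a t (t + 1)) // ?Dcst ?addr0 //; by rewrite lerDl ler01.
Qed.

End Antider.

Section Geo.
Variable R : realType.
Variable n : nat.
Notation pt := 'rV[R]_n.
Variable i0 : 'I_n.

Lemma sum1 (F : 'I_n -> R) j : (forall k, k != j -> F k = 0) -> \sum_k F k = F j.
Proof. by move=> H; rewrite (bigD1 j) //= big1 ?addr0 // => k /H. Qed.

Lemma gmat_flat (L : 'I_n -> R) x : gmat (gflat L) x = diag_mx (\row_i L i ^+ 2).
Proof.
apply/matrixP => i j; rewrite !mxE /gflat; case: eqP => [->|]; first by rewrite mulr1n.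
by rewrite mulr0n.
Qed.

Lemma ginv_flat (L : 'I_n -> R) i j x : (forall i, L i != 0) ->
  ginv (gflat L) i j x = if i == j then (L i ^+ 2)^-1 else 0.
Proof.
move=> L0; rewrite /ginv gmat_flat.
have E : diag_mx (\row_i L i ^+ 2) *m diag_mx (\row_i (L i ^+ 2)^-1) = 1%:M.
  rewrite mulmx_diag; apply/matrixP => a b; rewrite !mxE.
  by rewrite mulfV ?expf_neq0 ?L0.
have [U _] := mulmx1_unit E.
have -> : invmx (diag_mx (\row_i L i ^+ 2)) = diag_mx (\row_i (L i ^+ 2)^-1).
  by rewrite -[RHS](mulKmx U) E mulmx1.
rewrite !mxE; case: eqP => [->|]; first by rewrite mulr1n.
by rewrite mulr0n.
Qed.

Lemma Gamma_flat (L : 'I_n -> R) : Gamma (gflat L) = fun _ _ _ _ => 0.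
Proof.
apply/funext => k; apply/funext => i; apply/funext => j; apply/funext => x.
rewrite /Gamma big1 ?mulr0 // => l _.
by rewrite !pd_inv ?subr0 ?addr0 ?mulr0.
Qed.

Lemma scal_flat (L : 'I_n -> R) x : scal (gflat L) x = 0.
Proof.
rewrite /scal big1 // => i _; rewrite big1 // => j _.
rewrite /ricci Gamma_flat big1 ?mulr0 // => k _.
by rewrite !pd_cst subrr add0r big1 // => l _; rewrite !mulr0 subrr.
Qed.

Definition Kd (L : 'I_n -> R) (tb : pt -> R) : tfield R n :=
  fun i j x => if (i == j) && (i == i0) then tb x * L i0 ^+ 2 else 0.

Lemma trK_Kd L tb x : (forall i, L i != 0) -> trK (gflat L) (Kd L tb) x = tb x.
Proof.
move=> L0; rewrite /trK (@sum1 _ i0) => [|i /negbTE ii0].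
  rewrite (@sum1 _ i0) => [|j /negbTE ji0].
    rewrite ginv_flat // /Kd !eqxx /=; have := L0 i0 => ?; by field.
  by rewrite ginv_flat // eq_sym ji0 mul0r.
rewrite big1 // => j _; rewrite /Kd ii0 andbF mulr0 //.
Qed.

Lemma normK_Kd L tb x : (forall i, L i != 0) -> normK (gflat L) (Kd L tb) x = tb x ^+ 2.
Proof.
move=> L0; rewrite /normK (@sum1 _ i0) => [|i /negbTE ii0]; last first.
  by rewrite !big1 // => j _; rewrite !big1 // => a _; rewrite !big1 // => b _; rewrite /Kd ii0 andbF mulr0 mul0r.
rewrite (@sum1 _ i0) => [|j /negbTE ji0]; last first.
  by rewrite !big1 // => a _; rewrite !big1 // => b _; rewrite /Kd eq_sym ji0 /= mulr0 mul0r.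
rewrite (@sum1 _ i0) => [|a /negbTE ai0]; last first.
  by rewrite !big1 // => b _; rewrite ginv_flat // eq_sym ai0 !mul0r.
rewrite (@sum1 _ i0) => [|b /negbTE bi0]; last first.
  by rewrite /Kd (eq_sym i0 b) bi0 /= mulr0.
rewrite !ginv_flat // /Kd !eqxx /=.
have := L0 i0 => ?; by field.
Qed.

Lemma pd_mulr i (f : pt -> R) (a : R) x : differentiable f x ->
  pd i (fun y => f y * a) x = pd i f x * a.
Proof.
move=> df; rewrite /pd.
have dv : derivable f x (ebas R i) by exact: diff_derivable.
have E : 'D_(ebas R i) (a \*: f) x = a *: 'D_(ebas R i) f x by apply: deriveZ.
have -> : (fun y => f y * a) = a \*: f by apply/funext => y /=; rewrite mulrC.
by rewrite E /= mulrC.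
Qed.

Lemma divK_Kd L tb j x : (forall i, L i != 0) -> (forall y, differentiable tb y) ->
  divK (gflat L) (Kd L tb) j x = if j == i0 then pd i0 tb x else 0.
Proof.
move=> L0 dtb; rewrite /divK /covD Gamma_flat.
rewrite (@sum1 _ i0) => [|i /negbTE ii0]; last first.
  rewrite big1 // => k _; rewrite /Kd ii0 andbF pd_cst big1 ?subr0 ?mulr0 //.
  by move=> l _; rewrite !mul0r addr0.
rewrite (@sum1 _ i0) => [|k /negbTE ki0]; last by rewrite ginv_flat // eq_sym ki0 mul0r.
rewrite big1 ?subr0; last by move=> l _; rewrite !mul0r addr0.
rewrite ginv_flat // eqxx /Kd eqxx andbT.
case: ifP => ji0; rewrite eq_sym ji0; last by rewrite pd_cst mulr0.
rewrite pd_mulr //; have := L0 i0 => ?; by field.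
Qed.

Lemma constraints_Kd L tb : (forall i, L i != 0) -> (forall y, differentiable tb y) ->
  (forall j x, j != i0 -> pd j tb x = 0) -> constraints (gflat L) (Kd L tb).
Proof.
move=> L0 dtb ptb x; split.
  by rewrite scal_flat normK_Kd // trK_Kd // sub0r addNr.
move=> j; rewrite divK_Kd //.
have -> : trK (gflat L) (Kd L tb) = tb by apply/funext => y; rewrite trK_Kd.
case: (eqVneq j i0) => [->|ji]; first by [].
by rewrite ptb.
Qed.

End Geo.

Section Coord.
Variable R : realType.
Variable n : nat.
Notation pt := 'rV[R]_n.

Lemma ebasE (k i : 'I_n) : ebas R k 0 i = if i == k then 1 else 0.
Proof. by rewrite /ebas mxE eqxx /= eq_sym; case: eqP. Qed.

Lemma pd_coord (F : R -> R) k i (x : pt) d : is_derive (x 0 i) (1 : R) F d ->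
  pd k (fun y : pt => F (y 0 i)) x = if k == i then d else 0.
Proof.
move=> [dF <-]; case: ifP => ki.
  move/eqP: ki => ->; rewrite /pd /derive.
  suff -> : (fun h : R => h^-1 *: (((fun y : pt => F (y 0 i)) \o shift x) (h *: ebas R i) - F (x 0 i)))
    = (fun h : R => h^-1 *: ((F \o shift (x 0 i)) (h *: 1) - F (x 0 i))) by [].
  by apply/funext => h /=; rewrite !mxE !eqxx /= mulr1 /GRing.scale /= mulr1.
apply: pd_inv => t; rewrite !mxE /= (eq_sym i k) ki mulr0 addr0 //.
Qed.

Lemma diff_coord (F : R -> R) i (x : pt) d : is_derive (x 0 i) (1 : R) F d ->
  differentiable (fun y : pt => F (y 0 i)) x.
Proof.
move=> [dF _]; apply: (@differentiable_comp _ _ _ _ (fun y : pt => y 0 i) F).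
  exact: differentiable_coord.
exact/derivable1_diffP.
Qed.

End Coord.

Section TorusInt.
Variable R : realType.
Variable n' : nat.
Notation n := n'.+1.
Notation pt := 'rV[R]_n.
Notation mu := (@lebesgue_measure R).

Lemma Rint01_cst (a : R) : Rintegral mu `[0, 1] (fun _ => a) = a.
Proof.
rewrite Rintegral_cst //= lebesgue_measure_itv /= lte_fin ltr01 /= oppr0 addr0 /= mulr1 //.
Qed.

Lemma iter_int_dep s (F : pt -> R) : (forall k, k \in s -> k != ord0) ->
  (forall x y : pt, x 0 ord0 = y 0 ord0 -> F x = F y) -> iter_int s F = F.
Proof.
move=> Hs HF; elim: s Hs => [//|k s IH] Hs /=.
rewrite IH; last by move=> j js; apply: Hs; rewrite inE js orbT.
apply/funext => x.
have -> : (fun t => F (set_coord x k t)) = (fun _ => F x).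
  apply/funext => t; apply: HF; rewrite /set_coord !mxE /=.
  have := Hs k; rewrite inE eqxx => /(_ isT) /negbTE.
  by rewrite eq_sym => ->; rewrite mulr0 addr0.
exact: Rint01_cst.
Qed.

Lemma torus_int_red (g : tfield R n) (f : pt -> R) :
  (forall x y : pt, x 0 ord0 = y 0 ord0 -> f x * Num.sqrt (\det (gmat g x)) = f y * Num.sqrt (\det (gmat g y))) ->
  torus_int g f = Rintegral mu `[0, 1] (fun t => f (set_coord 0 ord0 t) * Num.sqrt (\det (gmat g (set_coord 0 ord0 t)))).
Proof.
move=> Hf; rewrite /torus_int enum_ordSl /= iter_int_dep //.
by move=> k /mapP [j _ ->]; rewrite eq_sym neq_lift.
Qed.

End TorusInt.

Section WEx.
Variable R : realType.
Variable n' : nat.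
Notation n := n'.+1.
Notation pt := 'rV[R]_n.
Notation mu := (@lebesgue_measure R).

Lemma sc_diff (t : R) : differentiable (fun s : R => set_coord (0 : pt) ord0 s) t.
Proof.
rewrite /set_coord; apply: differentiableD => //.
apply: differentiableZl; apply: differentiableB => //.
Qed.

Lemma dep0 (f : pt -> R) : dep_s1 f -> forall x y : pt, x 0 ord0 = y 0 ord0 -> f x = f y.
Proof.
move=> H x y E; apply: H => i i0.
by have -> : i = ord0 by apply: val_inj.
Qed.

Lemma W_ex (l : 'I_n -> R) (xi N : pt -> R) (a : R) :
  (forall k, 0 < l k) -> torus_fun xi -> torus_fun N -> dep_s1 xi -> dep_s1 N ->
  torus_int (gflat l) (fun x => xi x * N x) = 0 ->
  exists w : pt -> R, torus_fun w /\
    forall k x, pd k w x = if k == ord0 then a * (xi x * N x) else 0.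
Proof.
move=> l0 [xs xp] [Ns Np] xd Nd I0.
set D := Num.sqrt (\det (gmat (gflat l) (0 : pt))).
have Dx : forall x : pt, Num.sqrt (\det (gmat (gflat l) x)) = D by [].
have D0 : 0 < D.
  rewrite /D sqrtr_gt0 gmat_flat det_diag; apply: prodr_gt0 => i _.
  by rewrite mxE exprn_gt0.
set f := fun x : pt => xi x * N x * D.
have fs : smooth f := smooth_mul (smooth_mul xs Ns) (smooth_cst D).
have fd : forall x y : pt, x 0 ord0 = y 0 ord0 -> f x = f y.
  by move=> x y E; rewrite /f (dep0 xd E) (dep0 Nd E).
have fp : Defs.periodic f by move=> x i; rewrite /f xp Np.
set h := fun t => f (set_coord (0 : pt) ord0 t).
have h0 : Rintegral mu `[0, 1] h = 0.
  have HH : forall x y : pt, x 0 ord0 = y 0 ord0 ->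
      xi x * N x * Num.sqrt (\det (gmat (gflat l) x)) = xi y * N y * Num.sqrt (\det (gmat (gflat l) y)).
    by move=> x y E; rewrite !Dx; congr (_ * _); rewrite (dep0 xd E) (dep0 Nd E).
  by rewrite -[RHS]I0 (torus_int_red HH).
have hc : continuous h.
  move=> t; apply: differentiable_continuous.
  apply: (@differentiable_comp _ _ _ _ (fun s : R => set_coord (0 : pt) ord0 s) f).
    exact: sc_diff.
  exact: smooth_diff.
have hp : forall t, h (t + 1) = h t.
  move=> t; rewrite /h.
  have -> : set_coord (0 : pt) ord0 (t + 1) = set_coord 0 ord0 t + ebas R ord0.
    by rewrite /set_coord !add0r mxE subr0 subr0 scalerDl scale1r.
  exact: fp.
have [F [Fd Fp]] := antider_ex hc hp h0.
pose G := (a / D) \*: F.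
have Gd : forall t, is_derive t (1 : R) G (a / D *: h t).
  by move=> t; apply: is_deriveZ.
exists (fun x : pt => G (x 0 ord0)).
have pw : forall k x, pd k (fun x : pt => G (x 0 ord0)) x =
    if k == ord0 then a * (xi x * N x) else 0.
  move=> k x; rewrite (pd_coord k (Gd (x 0 ord0))); case: ifP => // _.
  rewrite /h (fd _ x); last by rewrite /set_coord !mxE !eqxx /= mulr1 subr0 add0r.
  rewrite /f /GRing.scale /=; have := D0; rewrite lt0r => /andP [Dn _]; by field.
split=> //; split.
  move=> s x; case/lastP: s => [|s k] /=; first exact: diff_coord (Gd _).
  rewrite iter_pd_rcons.
  have -> : pd k (fun x : pt => G (x 0 ord0)) =
      if k == ord0 then (fun _ => a) \* (xi \* N) else (fun _ => 0).
    by apply/funext => y; rewrite pw; case: ifP.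
  case: ifP => _; last exact: smooth_cst.
  exact: (smooth_mul (smooth_cst a) (smooth_mul xs Ns) s x).
move=> x i; rewrite mxE ebasE; case: ifP => _; last by rewrite addr0.
by rewrite /G /= Fp.
Qed.

End WEx.

Section Main.
Variable R : realType.
Variable n' : nat.
Notation n := n'.+1.
Notation pt := 'rV[R]_n.

Lemma vi0 (i : 'I_n) : (val i == 0%N) = (i == ord0).
Proof. by []. Qed.

Lemma CK_lemma (l : 'I_n -> R) (w : pt -> R) (d : pt -> R) i j x :
  (forall k x, pd k w x = if k == ord0 then d x else 0) ->
  confKill (gflat l) (fun k => if k == ord0 then w else fun _ => 0) i j x =
  ((if j == ord0 then l j ^+ 2 else 0) * (if i == ord0 then d x else 0) +
   (if i == ord0 then l i ^+ 2 else 0) * (if j == ord0 then d x else 0))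
  - 2 / n%:R * d x * (if i == j then l i ^+ 2 else 0).
Proof.
move=> pw; rewrite /confKill /lieg /divW Gamma_flat.
rewrite (@sum1 _ _ _ ord0) => [|k /negbTE k0]; last first.
  by rewrite k0 !pd_cst !mulr0 !addr0.
rewrite (@sum1 _ _ _ ord0) => [|k /negbTE k0]; last first.
  by rewrite k0 pd_cst add0r big1 // => m _; rewrite mul0r.
rewrite big1; last by move=> m _; rewrite mul0r.
rewrite eqxx !pw eqxx addr0 pd_inv // mulr0 add0r /gflat.
by congr (_ * _ + _ - _); rewrite eq_sym; case: eqP => [->|].
Qed.

Lemma gen_sol (l : 'I_n -> R) (mu taus c : R) (xi N : pt -> R) :
  (3 <= n)%N -> (forall k, 0 < l k) -> torus_fun xi -> torus_fun N -> (forall x, 0 < N x) ->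
  dep_s1 xi -> dep_s1 N ->
  torus_int (gflat l) (fun x => xi x * N x) = 0 -> 0 < c -> mu = taus * c `^ qexp R n ->
  exists (phi : pt -> R) (W : 'I_n -> pt -> R),
     CTS_solution (gflat l) (fun i j x => mu * sigma_flat l i j x) taus xi N phi W /\
     (forall x, phi x = c) /\
     (forall (k : 'I_n) x, val k != 0%N -> W k x = 0) /\
     (forall i j x, (2 * N x)^-1 * confKill (gflat l) W i j x
                    = c `^ (- qexp R n) * xi x * sigma_flat l i j x) /\
     (forall i j x, gen_metric (gflat l) phi i j x
                    = gflat (fun k => c `^ ((qexp R n - 2) / 2) * l k) i j x) /\
     (forall i j x,
        gen_K (gflat l) (fun i j x => mu * sigma_flat l i j x) taus xi N phi W i j x
        = if (i == j) && (val i == 0%N)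
          then (taus + c `^ (- (2 * qexp R n)) * xi x) * (c `^ ((qexp R n - 2) / 2) * l i) ^+ 2
          else 0).
Proof.
move=> n3 l0 xt Nt N0 xd Nd I0 c0 muE.
set q := qexp R n. set r := c `^ ((q - 2) / 2). set a := c `^ (- q).
have [w [wt pw]] := W_ex a l0 xt Nt xd Nd I0.
set W := fun k : 'I_n => if k == ord0 then w else fun _ : pt => 0.
have nR : n%:R != 0 :> R by rewrite pnatr_eq0.
have nR' : (1 + n'%:R : R) != 0 by rewrite addrC natr1 pnatr_eq0.
have cn0 : c != 0 by rewrite gt_eqF.
have rP : r ^+ 2 = c `^ (q - 2).
  rewrite /r -powR_mulrn ?powR_ge0 // -powRrM; congr (_ `^ _); by field.
have GM : forall i j x, gen_metric (gflat l) (fun _ => c) i j x = gflat (fun k => r * l k) i j x.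
  move=> i j x; rewrite /gen_metric /gflat; case: ifP => _; last by rewrite mulr0.
  by rewrite exprMn rP.
have CK : forall i j x, (2 * N x)^-1 * confKill (gflat l) W i j x = a * xi x * sigma_flat l i j x.
  move=> i j x; rewrite (@CK_lemma l w _ i j x pw) /sigma_flat !vi0 /kappa.
  have Nn : N x != 0 by rewrite gt_eqF.
  case: (eqVneq i ord0) => [->|ni]; case: (eqVneq j ord0) => [->|nj].
  - by field; rewrite nR' Nn.
  - by rewrite ?(negbTE nj) ?(eq_sym ord0 j) ?(negbTE nj); field; rewrite nR' Nn.
  - by rewrite ?(negbTE ni); field; rewrite nR' Nn.
  - rewrite ?(negbTE ni) ?(negbTE nj); case: ifP => _; by field; rewrite nR' Nn.
set tb := fun x : pt => taus + c `^ (- (2 * q)) * xi x.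
have e20 : c `^ (-2) != 0 by rewrite gt_eqF // powR_gt0.
have HQ : c `^ q = c `^ (q - 2) / c `^ (-2).
  rewrite (_ : q - 2 = -2 + q); last by rewrite addrC.
  rewrite powRD; last by rewrite cn0 implybT.
  by field.
have HA : a = c `^ (q - 2) * c `^ (- (2 * q)) / c `^ (-2).
  rewrite -powRD; last by rewrite cn0 implybT.
  rewrite (_ : q - 2 + - (2 * q) = -2 + - q); last by ring.
  rewrite powRD; last by rewrite cn0 implybT.
  by rewrite /a; field.
have GK : forall i j x,
    gen_K (gflat l) (fun i j x => mu * sigma_flat l i j x) taus xi N (fun _ => c) W i j x
    = if (i == j) && (val i == 0%N) then tb x * (r * l i) ^+ 2 else 0.
  move=> i j x; rewrite /gen_K CK GM /sigma_flat /gflat !vi0 /kappa muE /tb exprMn rP HA HQ.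
  case: ifP => ij; last by rewrite !mulr0 !addr0 mulr0.
  case: ifP => i0.
    by field; rewrite nR' e20.
  by field; rewrite nR' e20.
exists (fun _ => c), W; split; last first.
  split=> //; split.
    by move=> k x; rewrite /W vi0 => /negbTE ->.
  by split=> //; split.
split; first by split; [exact: smooth_cst | by []].
split; first by [].
split.
  move=> k; rewrite /W; case: ifP => _ //; split; [exact: smooth_cst | by []].
have L0 : forall i, r * l i != 0.
  by move=> i; rewrite mulf_neq0 // gt_eqF // ?powR_gt0.
have -> : gen_metric (gflat l) (fun _ => c) = gflat (fun k => r * l k).
  by apply/funext => i; apply/funext => j; apply/funext => x; rewrite GM.
have -> : gen_K (gflat l) (fun i j x => mu * sigma_flat l i j x) taus xi N (fun _ => c) W
    = Kd ord0 (fun k => r * l k) tb.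
  apply/funext => i; apply/funext => j; apply/funext => x; rewrite GK /Kd vi0.
  by case: ifP => // /andP [_ /eqP ->].
apply: constraints_Kd => //.
  move=> y; apply: smooth_diff.
  exact: smooth_add (smooth_cst taus) (smooth_mul (smooth_cst _) xt.1).
move=> j x nj; apply: pd_inv => t; rewrite /tb (dep0 xd (y := x)) //.
by rewrite !mxE /= (eq_sym ord0 j) (negbTE nj) mulr0 addr0.
Qed.

End Main.

Unset Implicit Arguments.
Local Close Scope classical_set_scope.

Theorem proposition7p1 (R : realType) (n : nat) (l : 'I_n -> R) (mu taus : R)
  (xi N : 'rV[R]_n -> R) :
  (3 <= n)%N ->
  (forall k, 0 < l k) ->
  torus_fun xi -> torus_fun N -> (forall x, 0 < N x) ->
  dep_s1 xi -> dep_s1 N ->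
  torus_int (gflat l) (fun x => xi x * N x) = 0 ->
  (* part (1) *)
  (((0 < mu /\ 0 < taus) \/ (mu < 0 /\ taus < 0)) ->
   let c := (mu / taus) `^ (qexp R n)^-1 in
   let r := c `^ ((qexp R n - 2) / 2) in
   r = (mu / taus) `^ (n%:R^-1) /\
   exists (phi : 'rV[R]_n -> R) (W : 'I_n -> 'rV[R]_n -> R),
     CTS_solution (gflat l) (fun i j x => mu * sigma_flat l i j x) taus xi N phi W /\
     (forall x, phi x = c) /\
     (forall (k : 'I_n) x, val k != 0%N -> W k x = 0) /\
     (forall i j x, (2 * N x)^-1 * confKill (gflat l) W i j x
                    = c `^ (- qexp R n) * xi x * sigma_flat l i j x) /\
     (forall i j x, gen_metric (gflat l) phi i j x
                    = gflat (fun k => r * l k) i j x) /\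
     (forall i j x,
        gen_K (gflat l) (fun i j x => mu * sigma_flat l i j x) taus xi N phi W i j x
        = if (i == j) && (val i == 0%N)
          then (taus + c `^ (- (2 * qexp R n)) * xi x) * (r * l i) ^+ 2
          else 0)) /\
  (* part (2) *)
  (mu = 0 -> taus = 0 -> forall c : R, 0 < c ->
   let r := c `^ ((qexp R n - 2) / 2) in
   exists (phi : 'rV[R]_n -> R) (W : 'I_n -> 'rV[R]_n -> R),
     CTS_solution (gflat l) (fun i j x => mu * sigma_flat l i j x) taus xi N phi W /\
     (forall x, phi x = c) /\
     (forall i j x, (2 * N x)^-1 * confKill (gflat l) W i j x
                    = c `^ (- qexp R n) * xi x * sigma_flat l i j x) /\
     (forall i j x, gen_metric (gflat l) phi i j x
                    = gflat (fun k => r * l k) i j x) /\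
     (forall i j x,
        gen_K (gflat l) (fun i j x => mu * sigma_flat l i j x) taus xi N phi W i j x
        = if (i == j) && (val i == 0%N)
          then (c `^ (- (2 * qexp R n)) * xi x) * (r * l i) ^+ 2
          else 0)).
Proof.
case: n l xi N => [|n'] l xi N n3; first by [].
move=> l0 xt Nt N0 xd Nd I0.
have n3R : (3 : R) <= n'.+1%:R by rewrite ler_nat.
have qn : qexp R n'.+1 != 0.
  rewrite /qexp mulf_neq0 // ?invr_eq0 ?mulf_neq0 //; try (apply/eqP; lra).
split.
- move=> hs c r.
  have mt : 0 < mu / taus.
    case: hs => [[m t]|[m t]]; first exact: divr_gt0.
    by rewrite -divrNN divr_gt0 // oppr_gt0.
  have tn : taus != 0 by case: hs => [[_ t]|[_ t]]; [rewrite gt_eqF | rewrite lt_eqF].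
  have c0 : 0 < c by rewrite /c powR_gt0.
  have muE : mu = taus * c `^ qexp R n'.+1.
    rewrite /c -powRrM mulVf // powRr1 ?ltW //.
    by field.
  split.
    rewrite /r /c -powRrM; congr (_ `^ _).
    rewrite /qexp; field.
    have h1 : 1 + n'%:R != 0 :> R by rewrite addrC natr1 pnatr_eq0.
    have e : (n'.+1%:R : R) = 1 + n'%:R by rewrite -natr1 addrC.
    have h2 : 1 + n'%:R - 2 != 0 :> R by apply/eqP; lra.
    by rewrite h1 h2.
  exact: gen_sol n3 l0 xt Nt N0 xd Nd I0 c0 muE.
- move=> mu0 t0 c c0 r; subst mu taus.
  have muE : (0 : R) = 0 * c `^ qexp R n'.+1 by rewrite mul0r.
  have [phi [W [H1 [H2 [_ [H4 [H5 H6]]]]]]] := gen_sol n3 l0 xt Nt N0 xd Nd I0 c0 muE.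
  exists phi, W; split=> //; split=> //; split=> //; split=> //.
  by move=> i j x; rewrite H6 add0r.
Qed.
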